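(* Let $p\ge3$ be a prime power. Then $\mathfrak L(p,0)$ has a representation over a set of size $p^2$, and $\mathfrak L(p,1)$ has a representation over a set of size $2p^2$.
   Context: For $3\le p<\omega$, $0\le n<\omega$, $\mathfrak L(p,n)$ is the finite symmetric integral relation algebra with atoms $1',a_0,\dots,a_p,t_1,\dots,t_n$ whose composition of atoms is given, for $0\le i,j\le p$, $i\ne j$, $1\le k,l\le n$, $k\ne l$, by: $a_i;a_i=1'+a_i$; $a_i;a_j=0'\cdot\overline{a_i+a_j}$ (where $0'=\overline{1'}$); $a_i;t_k=t_1+\cdots+t_n$; $t_k;t_k=1'+a_0+\cdots+a_p$; $t_k;t_l=a_0+\cdots+a_p$. (So $\mathfrak L(p,0)$ has atoms $1',a_0,\dots,a_p$ only.) A representation over a set $D$ is an injective map $\theta$ into $\mathcal P(D\times D)$ sending $0,1,\overline{\phantom{x}},+,\cdot,1',\breve{\ },;$ to $\emptyset$, $D\times D$, complement, union, intersection, identity relation on $D$, converse and relational composition. *)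

(* Defs.v *)
From mathcomp Require Import all_boot.
Set Implicit Arguments. Unset Strict Implicit. Unset Printing Implicit Defensive.

(* Atoms of L(p,n):  None = 1',  Some (inl i) = a_i (i = 0..p),
   Some (inr k) = t_(k+1) (k = 0..n-1). *)
Notation Atom p n := (option ('I_p.+1 + 'I_n)%type).

Definition isA p n (x : Atom p n) : bool :=
  if x is Some (inl _) then true else false.
Definition isT p n (x : Atom p n) : bool :=
  if x is Some (inr _) then true else false.

Definition comp_atom p n (x y : Atom p n) : {set Atom p n} :=
  match x, y with
  | None, _ => [set y]
  | _, None => [set x]
  | Some (inl i), Some (inl j) =>
      if i == j then [set None; x]
      else [set z | [&& isA z, z != x & z != y]]
  | Some (inl _), Some (inr _) => [set z | isT z]
  | Some (inr _), Some (inl _) => [set z | isT z]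
  | Some (inr k), Some (inr l) =>
      if k == l then [set z | (z == None) || isA z] else [set z | isA z]
  end.

Definition Lcomp p n (X Y : {set Atom p n}) : {set Atom p n} :=
  \bigcup_(x in X) \bigcup_(y in Y) comp_atom x y.
Definition Lconv p n (X : {set Atom p n}) : {set Atom p n} := X. (* symmetric *)
Definition Lone p n : {set Atom p n} := [set None].

Definition relcomp (D : finType) (R S : {set D * D}) : {set D * D} :=
  [set u | [exists z, ((u.1, z) \in R) && ((z, u.2) \in S)]].
Definition relconv (D : finType) (R : {set D * D}) : {set D * D} :=
  [set u | (u.2, u.1) \in R].
Definition diag (D : finType) : {set D * D} := [set u | u.1 == u.2].

Definition is_representation p n (D : finType)
    (theta : {set Atom p n} -> {set D * D}) : Prop :=
  injective theta /\
  theta set0 = set0 /\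
  theta setT = setT /\
  (forall X, theta (~: X) = ~: theta X) /\
  (forall X Y, theta (X :|: Y) = theta X :|: theta Y) /\
  (forall X Y, theta (X :&: Y) = theta X :&: theta Y) /\
  theta (Lone p n) = diag D /\
  (forall X, theta (Lconv X) = relconv (theta X)) /\
  (forall X Y, theta (Lcomp X Y) = relcomp (theta X) (theta Y)).

Definition prime_power (m : nat) : Prop :=
  exists q k, prime q /\ m = q ^ k.+1.

(* Main.v *)
Require Import Defs.
From mathcomp Require Import all_boot.
From mathcomp Require Import all_algebra finfield.
From mathcomp Require Import zify ring.
Import GRing.Theory.

Set Implicit Arguments. Unset Strict Implicit. Unset Printing Implicit Defensive.

Section Gen.
Variables (p n : nat) (D : finType) (lab : D -> D -> Atom p n).
Hypothesis surj : forall a, exists u v, lab u v = a.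
Hypothesis labN : forall u v, (lab u v == None) = (u == v).
Hypothesis labS : forall u v, lab u v = lab v u.
Hypothesis key : forall x y u w,
  (lab u w \in comp_atom x y) = [exists z, (lab u z == x) && (lab z w == y)].

Lemma rep_of_lab : is_representation (fun X => [set uv | lab uv.1 uv.2 \in X]).
Proof.
split.
  move=> X Y E; apply/setP=> a; have [u [v Huv]] := surj a.
  by move/setP: E => /(_ (u,v)); rewrite !inE /= Huv.
split; first by apply/setP=> uv; rewrite !inE.
split; first by apply/setP=> uv; rewrite !inE.
split; first by move=> X; apply/setP=> uv; rewrite !inE.
split; first by move=> X Y; apply/setP=> uv; rewrite !inE.
split; first by move=> X Y; apply/setP=> uv; rewrite !inE.
split; first by apply/setP=> [[u v]]; rewrite !inE /= labN.
split; first by move=> X; apply/setP=> [[u v]]; rewrite !inE /= labS.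
move=> X Y; apply/setP=> [[u w]]; rewrite !inE /= /Lcomp.
apply/bigcupP/existsP.
  move=> [x Hx /bigcupP [y Hy]]; rewrite key => /existsP [z /andP [/eqP E1 /eqP E2]].
  by exists z; rewrite !inE /= E1 E2 Hx Hy.
move=> [z /andP []]; rewrite !inE /= => Hx Hy.
exists (lab u z) => //; apply/bigcupP; exists (lab z w) => //.
by rewrite key; apply/existsP; exists z; rewrite !eqxx.
Qed.

Lemma key_noneL y u w :
  (lab u w \in comp_atom None y) = [exists z, (lab u z == None) && (lab z w == y)].
Proof.
rewrite /= inE; apply/eqP/existsP.
  by move=> <-; exists u; rewrite labN !eqxx.
by move=> [z /andP []]; rewrite labN => /eqP <- /eqP.
Qed.

Lemma key_noneR x u w :
  (lab u w \in comp_atom x None) = [exists z, (lab u z == x) && (lab z w == None)].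
Proof.
have -> : comp_atom x None = [set x] by case: x => [[]|].
rewrite inE; apply/eqP/existsP.
  by move=> <-; exists w; rewrite labN !eqxx.
by move=> [z /andP []] /eqP <-; rewrite labN => /eqP ->.
Qed.
End Gen.

Section Geo.
Variables (F : fieldType).
Local Open Scope ring_scope.

Definition onv (v u w : F * F) : Prop :=
  exists2 c, c != 0 & w = (u.1 + c * v.1, u.2 + c * v.2).

Definition cross (v v' : F * F) := v.1 * v'.2 - v.2 * v'.1.

Lemma indep v v' a b : cross v v' != 0 ->
  a * v.1 + b * v'.1 = 0 -> a * v.2 + b * v'.2 = 0 -> a = 0 /\ b = 0.
Proof.
move=> Hc E1 E2; split.
  have : a * cross v v' = v'.2 * (a * v.1 + b * v'.1) - v'.1 * (a * v.2 + b * v'.2)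
    by rewrite /cross; ring.
  by rewrite E1 E2 !mulr0 subr0 => /eqP; rewrite mulf_eq0 (negbTE Hc) orbF => /eqP.
have : b * cross v v' = v.1 * (a * v.2 + b * v'.2) - v.2 * (a * v.1 + b * v'.1)
  by rewrite /cross; ring.
by rewrite E1 E2 !mulr0 subr0 => /eqP; rewrite mulf_eq0 (negbTE Hc) orbF => /eqP.
Qed.

Lemma onv_sym v u w : onv v u w -> onv v w u.
Proof.
case: u w => u1 u2 [w1 w2] [c Hc [-> ->]]; exists (- c); first by rewrite oppr_eq0.
by rewrite /=; rewrite /=; congr pair; ring.
Qed.

Lemma G1 v u w (t : F) : t != 0 -> t != 1 ->
  (exists z, onv v u z /\ onv v z w) <-> (u = w \/ onv v u w).
Proof.
case: u w => u1 u2 [w1 w2] Ht0 Ht1; split.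
  move=> [[z1 z2] [[c1 Hc1 [-> ->]] [c2 Hc2 [-> ->]]]].
  have [E|NE] := eqVneq (c1 + c2) 0.
    left; have -> : c2 = - c1 by apply/eqP; rewrite -addr_eq0 addrC E.
    by rewrite /=; congr pair; ring.
  by right; exists (c1 + c2) => //; rewrite /=; congr pair; ring.
move=> [[-> ->]|[c Hc [-> ->]]].
  exists (w1 + 1 * v.1, w2 + 1 * v.2); split; first by exists 1; rewrite ?oner_eq0.
  by exists (-1); rewrite ?oppr_eq0 ?oner_eq0 //; rewrite /=; congr pair; ring.
exists (u1 + (t * c) * v.1, u2 + (t * c) * v.2); split.
  by exists (t * c); rewrite // mulf_neq0.
exists ((1 - t) * c); last by rewrite /=; congr pair; ring.
by rewrite mulf_neq0 // subr_eq0 eq_sym.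
Qed.

Lemma G2 v v' u w : cross v v' != 0 ->
  (exists z, onv v u z /\ onv v' z w) <-> [/\ u <> w, ~ onv v u w & ~ onv v' u w].
Proof.
case: u w => u1 u2 [w1 w2] Hc; split.
  move=> [[z1 z2] [[a Ha [Ez1 Ez2]] [b Hb [Ew1 Ew2]]]].
  move: Ez1 Ez2 Ew1 Ew2 => /= Ez1 Ez2 Ew1 Ew2; split.
  - move=> [E1 E2].
    have H1 : a * v.1 + b * v'.1 = w1 - u1 by rewrite Ew1 Ez1; ring.
    have H2 : a * v.2 + b * v'.2 = w2 - u2 by rewrite Ew2 Ez2; ring.
    rewrite -E1 -E2 !subrr in H1 H2.
    by have [_ Hb0] := indep Hc H1 H2; rewrite Hb0 eqxx in Hb.
  - move=> [c _ [E1 E2]].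
    have H1 : (a - c) * v.1 + b * v'.1 = w1 - w1 by rewrite {1}Ew1 Ez1 E1; ring.
    have H2 : (a - c) * v.2 + b * v'.2 = w2 - w2 by rewrite {1}Ew2 Ez2 E2; ring.
    rewrite !subrr in H1 H2.
    by have [_ Hb0] := indep Hc H1 H2; rewrite Hb0 eqxx in Hb.
  - move=> [c _ [E1 E2]].
    have H1 : a * v.1 + (b - c) * v'.1 = w1 - w1 by rewrite {1}Ew1 Ez1 E1; ring.
    have H2 : a * v.2 + (b - c) * v'.2 = w2 - w2 by rewrite {1}Ew2 Ez2 E2; ring.
    rewrite !subrr in H1 H2.
    by have [Ha0 _] := indep Hc H1 H2; rewrite Ha0 eqxx in Ha.
move=> [Nuw Nv Nv'].
set d1 := w1 - u1; set d2 := w2 - u2.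
set a := (d1 * v'.2 - d2 * v'.1) / cross v v'.
set b := (v.1 * d2 - v.2 * d1) / cross v v'.
have E1 : w1 = u1 + a * v.1 + b * v'.1.
  by rewrite /a /b /d1 /d2; move: Hc; rewrite /cross => Hc; field.
have E2 : w2 = u2 + a * v.2 + b * v'.2.
  by rewrite /a /b /d1 /d2; move: Hc; rewrite /cross => Hc; field.
have [Ha|Ha] := eqVneq a 0.
  exfalso; have [Hb|Hb] := eqVneq b 0.
    by apply: Nuw; rewrite E1 E2 Ha Hb !mul0r !addr0.
  by apply: Nv'; exists b => //; rewrite E1 E2 Ha !mul0r !addr0.
have [Hb|Hb] := eqVneq b 0.
  by exfalso; apply: Nv; exists a => //; rewrite E1 E2 Hb !mul0r !addr0.
exists (u1 + a * v.1, u2 + a * v.2); split; first by exists a.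
by exists b => //; rewrite E1 E2.
Qed.

End Geo.

Section Concrete.
Variables (p : nat) (F : finFieldType) (cardF : #|F| = p) (Hp : 2 < p).
Local Open Scope ring_scope.

Lemma exists_t : exists t : F, (t != 0) && (t != 1).
Proof.
case: (boolP [exists t : F, (t != 0) && (t != 1)]) => [/existsP //|/existsPn H]; exfalso.
have : (#|F| <= #|[set (0:F)%R; 1%R]|)%N.
  apply/subset_leq_card/subsetP => t _; rewrite !inE; move: (H t).
  by rewrite negb_and !negbK.
rewrite cards2 cardF; case: (_ != _) => /=; lia.
Qed.

Definition e (i : 'I_p) : F := enum_val (cast_ord (esym cardF) i).
Definition er (x : F) : 'I_p := cast_ord cardF (enum_rank x).
Lemma erK x : e (er x) = x.
Proof. by rewrite /e /er cast_ordK enum_rankK. Qed.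
Lemma e_inj : injective e.
Proof. by move=> i j /enum_val_inj /cast_ord_inj. Qed.

Definition vec (i : 'I_p.+1) : F * F :=
  if unlift ord_max i is Some j then (1, e j) else (0, 1).

Lemma vec_cross i j : i != j -> cross (vec i) (vec j) != 0.
Proof.
rewrite /vec /cross; case: unliftP => [i' ->|->]; case: unliftP => [j' ->|->] //=.
- rewrite (inj_eq lift_inj) => Hij.
  by rewrite mul1r mulr1 subr_eq0 eq_sym (inj_eq e_inj).
- by move=> _; rewrite mulr0 mulr1 subr0 oner_eq0.
- by move=> _; rewrite mul0r mulr1 sub0r oppr_eq0 oner_eq0.
- by rewrite eqxx.
Qed.

Lemma vec_nz i : vec i != (0, 0).
Proof. by rewrite /vec; case: unlift => [j|]; rewrite xpair_eqE oner_eq0 ?andbF. Qed.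

Definition onb i (u w : F * F) :=
  [exists c, (c != 0) && (w == (u.1 + c * (vec i).1, u.2 + c * (vec i).2))].

Lemma onbP i u w : reflect (onv (vec i) u w) (onb i u w).
Proof.
apply: (iffP existsP) => [[c /andP [Hc /eqP E]]|[c Hc E]]; exists c => //.
by rewrite Hc E eqxx.
Qed.

Lemma onb_ne i u w : onb i u w -> u != w.
Proof.
move/onbP => [c Hc E]; apply/eqP => Euw; move: (vec_nz i) E; rewrite -Euw.
case: u {Euw} => u1 u2 /= Hv [E1 E2].
have H1 : c * (vec i).1 = 0 by apply: (addrI u1); rewrite addr0 -E1.
have H2 : c * (vec i).2 = 0 by apply: (addrI u2); rewrite addr0 -E2.
move: H1 H2 Hv; case: (vec i) => v1 v2 /=.
move=> /eqP; rewrite mulf_eq0 (negbTE Hc) /= => /eqP ->.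
move=> /eqP; rewrite mulf_eq0 (negbTE Hc) /= => /eqP ->.
by rewrite eqxx.
Qed.

Lemma onb_sym i u w : onb i u w = onb i w u.
Proof. by apply/onbP/onbP => /onv_sym. Qed.

Lemma onb_uniq i j u w : onb i u w -> onb j u w -> i = j.
Proof.
move=> /onbP [c Hc E] /onbP [c' Hc' E']; apply/eqP; apply: contraT => Hij.
have Hx := vec_cross Hij.
case: u w E E' => u1 u2 [w1 w2] /= [E1 E2] [E1' E2'].
have H1 : c * (vec i).1 + (- c') * (vec j).1 = w1 - w1 by rewrite {1}E1 E1'; ring.
have H2 : c * (vec i).2 + (- c') * (vec j).2 = w2 - w2 by rewrite {1}E2 E2'; ring.
rewrite !subrr in H1 H2.
by have [Hc0 _] := indep Hx H1 H2; rewrite Hc0 eqxx in Hc.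
Qed.

Lemma onb_ex u w : u != w -> exists i, onb i u w.
Proof.
case: u w => u1 u2 [w1 w2] Hne.
have [E|NE] := eqVneq (w1 - u1) 0.
  have Ew : w1 = u1 by apply/eqP; rewrite -subr_eq0 E.
  exists ord_max; apply/onbP; exists (w2 - u2).
    apply: contra Hne; rewrite subr_eq0 => /eqP ->.
    by rewrite Ew.
  rewrite /vec unlift_none /= Ew.
  by congr pair; ring.
exists (lift ord_max (er ((w2 - u2) / (w1 - u1)))); apply/onbP.
exists (w1 - u1) => //; rewrite /vec liftK erK /=.
by congr pair; field.
Qed.

Definition dir u w := odflt ord0 [pick i | onb i u w].

Lemma dirP u w : u != w -> onb (dir u w) u w.
Proof.
move=> Hne; rewrite /dir; case: pickP => [i Hi|H] //=.
by have [i Hi] := onb_ex Hne; rewrite H in Hi.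
Qed.

Definition lab (u w : F * F) : Atom p 0 :=
  if u == w then None else Some (inl (dir u w)).

Lemma labN u w : (lab u w == None) = (u == w).
Proof. by rewrite /lab; case: (u == w). Qed.

Lemma labA i u w : (lab u w == Some (inl i)) = onb i u w.
Proof.
rewrite /lab; have [->|Hne] := eqVneq u w.
  by apply/esym/negbTE/negP => /onb_ne; rewrite eqxx.
apply/eqP/idP => [[<-]|H]; first exact: dirP.
by congr (Some (inl _)); exact: onb_uniq (dirP Hne) H.
Qed.

Lemma labS u w : lab u w = lab w u.
Proof.
rewrite /lab eq_sym; have [//|Hne] := eqVneq w u; rewrite eq_sym in Hne.
congr (Some (inl _)); apply: onb_uniq (dirP Hne) _.
by rewrite onb_sym; apply: dirP; rewrite eq_sym.
Qed.

Lemma labisA u w : isA (lab u w) = (u != w).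
Proof. by rewrite /lab; case: (u == w). Qed.

Lemma lab_surj a : exists u v, lab u v = a.
Proof.
case: a => [[i|k]|]; last by exists (0,0), (0,0); rewrite /lab eqxx.
  exists (0,0), (vec i); apply/eqP; rewrite labA; apply/onbP.
  by exists 1; rewrite ?oner_eq0 //= !add0r !mul1r; case: (vec i).
by case: k => k Hk; exfalso; rewrite ltn0 in Hk.
Qed.

Lemma key0 x y u w :
  (lab u w \in comp_atom x y) = [exists z, (lab u z == x) && (lab z w == y)].
Proof.
have [t /andP [Ht0 Ht1]] := exists_t.
case: x => [[i|k]|]; last exact: key_noneL labN _ _ _.
  case: y => [[j|k]|]; last exact: key_noneR labN _ _ _.
    rewrite /=; have [<-|Hij] := eqVneq i j.
      rewrite !inE labN labA; apply/idP/existsP.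
        move=> H; have [z [H1 H2]] : exists z, onv (vec i) u z /\ onv (vec i) z w.
          apply/(G1 _ _ _ Ht0 Ht1); case/orP: H => [/eqP->|/onbP]; [left|right] => //.
        by exists z; rewrite !labA; apply/andP; split; apply/onbP.
      move=> [z /andP []]; rewrite !labA => /onbP H1 /onbP H2.
      have [->|/onbP ->] := (G1 _ _ _ Ht0 Ht1).1 (ex_intro _ z (conj H1 H2)).
        by rewrite eqxx.
      by rewrite orbT.
    rewrite !inE labisA !labA; apply/idP/existsP.
      case/and3P => Hne Hi Hj.
      have [z [H1 H2]] : exists z, onv (vec i) u z /\ onv (vec j) z w.
        apply/(G2 _ _ (vec_cross Hij)); split.
        - by apply/eqP.
        - by move/onbP => H; rewrite H in Hi.
        - by move/onbP => H; rewrite H in Hj.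
      by exists z; rewrite !labA; apply/andP; split; apply/onbP.
    move=> [z /andP []]; rewrite !labA => /onbP H1 /onbP H2.
    have [Hne Hi Hj] := (G2 _ _ (vec_cross Hij)).1 (ex_intro _ z (conj H1 H2)).
    by apply/and3P; split; [apply/eqP | apply/onbP | apply/onbP].
  by case: k => k Hk; exfalso; rewrite ltn0 in Hk.
by case: k => k Hk; exfalso; rewrite ltn0 in Hk.
Qed.

Lemma rep0 : is_representation (fun X => [set uv | lab uv.1 uv.2 \in X]).
Proof. exact: rep_of_lab lab_surj labN labS key0. Qed.

Definition emb (a : Atom p 0) : Atom p 1 :=
  if a is Some (inl i) then Some (inl i) else None.

Definition lab2 (U W : (F * F) * bool) : Atom p 1 :=
  if U.2 == W.2 then emb (lab U.1 W.1) else Some (inr ord0).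

Lemma I1 (k l : 'I_1) : k = l.
Proof. by apply/val_inj; case: k l => [[|?] ?] [[|?] ?]. Qed.

Lemma lab2N U W : (lab2 U W == None) = (U == W).
Proof.
case: U W => [u b] [w c]; rewrite /lab2 /= xpair_eqE.
case: (b == c); rewrite ?andbF ?andbT //= -labN.
by case: (lab u w) => [[?|[]]|].
Qed.

Lemma lab2A i U W : (lab2 U W == Some (inl i)) = (U.2 == W.2) && onb i U.1 W.1.
Proof.
rewrite /lab2 -labA; case: (U.2 == W.2) => //=.
by case: (lab U.1 W.1) => [[?|[]]|].
Qed.

Lemma lab2T k U W : (lab2 U W == Some (inr k)) = (U.2 != W.2).
Proof.
rewrite /lab2; case: (U.2 == W.2) => /=.
  by case: (lab U.1 W.1) => [[?|[]]|].
by rewrite (I1 k ord0) eqxx.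
Qed.

Lemma lab2isA U W : isA (lab2 U W) = (U.2 == W.2) && (U.1 != W.1).
Proof.
rewrite /lab2 -labisA; case: (U.2 == W.2) => //=.
by case: (lab U.1 W.1) => [[?|[]]|].
Qed.

Lemma lab2isT U W : Defs.isT (lab2 U W) = (U.2 != W.2).
Proof.
rewrite /lab2; case: (U.2 == W.2) => //=.
by case: (lab U.1 W.1) => [[?|[]]|].
Qed.

Lemma lab2S U W : lab2 U W = lab2 W U.
Proof. by rewrite /lab2 eq_sym labS. Qed.

Lemma lab2_surj a : exists u v, lab2 u v = a.
Proof.
case: a => [[i|k]|].
- have [u [v E]] := lab_surj (Some (inl i)).
  by exists (u, true), (v, true); rewrite /lab2 /= E.
- by exists ((0,0), true), ((0,0), false); rewrite /lab2 /= (I1 k ord0).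
- by exists ((0,0), true), ((0,0), true); apply/eqP; rewrite lab2N.
Qed.

Lemma key1 x y U W :
  (lab2 U W \in comp_atom x y) = [exists z, (lab2 U z == x) && (lab2 z W == y)].
Proof.
have [t /andP [Ht0 Ht1]] := exists_t.
case: U W => [u b] [w c].
case: x => [[i|k]|]; last exact: key_noneL lab2N _ _ _.
  case: y => [[j|l]|]; last exact: key_noneR lab2N _ _ _.
    rewrite /=; have [<-|Hij] := eqVneq i j.
      rewrite !inE lab2N lab2A xpair_eqE /=; apply/idP/existsP.
        move=> H; have Ebc : b == c by case/orP: H => /andP [].
        have H' : u = w \/ onv (vec i) u w.
          by case/orP: H => /andP [] => [/eqP -> _|_ /onbP]; [left|right].
        have [z [H1 H2]] := (G1 _ _ _ Ht0 Ht1).2 H'.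
        exists (z, b); rewrite !lab2A /= eqxx Ebc /=.
        by apply/andP; split; apply/onbP.
      move=> [[z d] /andP []]; rewrite !lab2A /= => /andP [/eqP Ebd /onbP H1] /andP [Edc /onbP H2].
      rewrite Ebd Edc.
      have [->|/onbP ->] := (G1 _ _ _ Ht0 Ht1).1 (ex_intro _ z (conj H1 H2)).
        by rewrite eqxx.
      by rewrite orbT.
    rewrite !inE lab2isA !lab2A /=; apply/idP/existsP.
      case/and3P => /andP [Ebc Hne] Hi Hj.
      rewrite Ebc /= in Hi Hj.
      have [z [H1 H2]] : exists z, onv (vec i) u z /\ onv (vec j) z w.
        apply/(G2 _ _ (vec_cross Hij)); split.
        - by apply/eqP.
        - by move/onbP => H; rewrite H in Hi.
        - by move/onbP => H; rewrite H in Hj.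
      by exists (z, b); rewrite !lab2A /= eqxx Ebc /=; apply/andP; split; apply/onbP.
    move=> [[z d] /andP []]; rewrite !lab2A /= => /andP [/eqP Ebd /onbP H1] /andP [Edc /onbP H2].
    rewrite Ebd Edc /=.
    have [Hne Hi Hj] := (G2 _ _ (vec_cross Hij)).1 (ex_intro _ z (conj H1 H2)).
    by apply/and3P; split; [apply/eqP | apply/onbP | apply/onbP].
  rewrite /= inE lab2isT /=; apply/idP/existsP.
    move=> Hbc; exists ((u.1 + 1 * (vec i).1, u.2 + 1 * (vec i).2), b).
    rewrite lab2A lab2T /= eqxx Hbc andbT /=; apply/onbP.
    by exists 1; rewrite ?oner_eq0.
  by move=> [[z d] /andP []]; rewrite lab2A lab2T /= => /andP [/eqP -> _].
case: y => [[j|l]|]; last exact: key_noneR lab2N _ _ _.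
  rewrite /= inE lab2isT /=; apply/idP/existsP.
    move=> Hbc; exists ((w.1 + 1 * (vec j).1, w.2 + 1 * (vec j).2), c).
    rewrite lab2A lab2T /= eqxx Hbc /= onb_sym; apply/onbP.
    by exists 1; rewrite ?oner_eq0.
  by move=> [[z d] /andP []]; rewrite lab2A lab2T /= => H /andP [/eqP <- _].
rewrite /= (I1 k l) eqxx inE lab2N lab2isA xpair_eqE /=; apply/idP/existsP.
  move=> H; have Ebc : b == c by case/orP: H => /andP [].
  exists (u, ~~ b); rewrite !lab2T /= -(eqP Ebc).
  by case: b {Ebc H}.
move=> [[z d] /andP []]; rewrite !lab2T /= => H1 H2.
have Ebc : b == c by move: H1 H2; case: b; case: c; case: d.
by rewrite Ebc /= orbC; case: (u == w).
Qed.

Lemma rep1 : is_representation (fun X => [set uv | lab2 uv.1 uv.2 \in X]).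
Proof. exact: rep_of_lab lab2_surj lab2N lab2S key1. Qed.

End Concrete.

Theorem lemma8 (p : nat) (Hp3 : 3 <= p) (Hpp : prime_power p) :
  (exists (D : finType) (theta : {set Atom p 0} -> {set D * D}),
      #|D| = p ^ 2 /\ is_representation theta) /\
  (exists (D : finType) (theta : {set Atom p 1} -> {set D * D}),
      #|D| = 2 * p ^ 2 /\ is_representation theta).
Proof.
have [q [k [Hq Ep]]] := Hpp.
have [F _ cardF] := pPrimePowerField Hq (ltn0Sn k).
rewrite -Ep in cardF.
split.
  exists (F * F)%type, (fun X : {set Atom p 0} => [set uv | lab cardF uv.1 uv.2 \in X]); split; last exact: (rep0 cardF Hp3).
  by rewrite card_prod cardF mulnn.
exists ((F * F) * bool)%type, (fun X : {set Atom p 1} => [set uv | lab2 cardF uv.1 uv.2 \in X]); split; last exact: (rep1 cardF Hp3).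
by rewrite !card_prod cardF card_bool mulnn mulnC.
Qed.
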